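(* The axiom system $APAL_{int}$ is complete with respect to the class of all topo-models: for every formula $\varphi\in\mathcal{L}_{APAL_{int}}$, if $\varphi$ is valid in every topo-model, then $\varphi$ is a theorem of $APAL_{int}$.
   Context: Fix a countable set $\mathit{Prop}$ of propositional variables and a finite non-empty set $\mathcal{A}$ of agents. $\mathcal{L}_{APAL_{int}}$: $\varphi ::= p \mid \neg\varphi \mid \varphi\wedge\varphi \mid K_i\varphi \mid \mathrm{int}(\varphi)\mid [\varphi]\varphi\mid\Box\varphi$; $\mathcal{L}_{PAL_{int}}$ is its $\Box$-free fragment; $\bot:=p\wedge\neg p$, other connectives are abbreviations. Topo-models: $(X,\tau)$ a topological space with interior operator $\mathrm{Int}$. A neighbourhood function set $\Phi$ is a set of partial functions $\theta$ from $X$ to functions $\mathcal{A}\to\tau$ such that for all $x,y\in Dom(\theta)$, $i\in\mathcal{A}$, $U\in\tau$: (1) $\theta(x)(i)\in\tau$; (2) $x\in\theta(x)(i)$; (3) $\theta(x)(i)\subseteq Dom(\theta)$; (4) $y\in\theta(x)(i)$ implies $\theta(x)(i)=\theta(y)(i)$; (5) $\theta|_U\in\Phi$, where $Dom(\theta|_U)=Dom(\theta)\cap U$, $\theta|_U(x)(i)=\theta(x)(i)\cap U$. A topo-model is $(X,\tau,\Phi,V)$ with $V(p)\subseteq X$. Neighbourhood situations are $(x,\theta)$, $\theta\in\Phi$, $x\in Dom(\theta)$. Semantics: $(x,\theta)\models p$ iff $x\in V(p)$; Booleans usual; $(x,\theta)\models K_i\varphi$ iff $(y,\theta)\models\varphi$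 for all $y\in\theta(x)(i)$; $(x,\theta)\models\mathrm{int}(\varphi)$ iff $x\in\mathrm{Int}([\![\varphi]\!]^\theta)$ with $[\![\varphi]\!]^\theta=\{y\in Dom(\theta)\mid(y,\theta)\models\varphi\}$; $(x,\theta)\models[\varphi]\psi$ iff $(x,\theta)\models\mathrm{int}(\varphi)$ implies $(x,\theta^\varphi)\models\psi$, with $\theta^\varphi=\theta|_{\mathrm{Int}([\![\varphi]\!]^\theta)}$; $(x,\theta)\models\Box\varphi$ iff $(x,\theta)\models[\psi]\varphi$ for all $\psi\in\mathcal{L}_{PAL_{int}}$. Validity = truth at all neighbourhood situations. Necessity forms: $\xi(\sharp)::=\sharp\mid\varphi\to\xi(\sharp)\mid K_i\xi(\sharp)\mid\mathrm{int}(\xi(\sharp))\mid[\varphi]\xi(\sharp)$; $\xi(\varphi)$ replaces the unique $\sharp$ by $\varphi$. $APAL_{int}$: axioms: propositional tautologies; $K_i(\varphi\to\psi)\to(K_i\varphi\to K_i\psi)$; $K_i\varphi\to\varphi$; $K_i\varphi\to K_iK_i\varphi$; $\neg K_i\varphi\to K_i\neg K_i\varphi$; $\mathrm{int}(\varphi\to\psi)\to(\mathrm{int}(\varphi)\to\mathrm{int}(\psi))$; $\mathrm{int}(\varphi)\to\varphi$; $\mathrm{int}(\varphi)\to\mathrm{int}(\mathrm{int}(\varphi))$; $K_i\varphi\to\mathrm{int}(\varphi)$; (R1) $[\varphi]p\leftrightarrow(\mathrm{int}(\varphi)\to p)$; (R2) $[\varphi]\neg\psi\leftrightarrow(\mathrm{int}(\varphi)\to\neg[\varphi]\psi)$;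 (R3) $[\varphi](\psi\wedge\chi)\leftrightarrow[\varphi]\psi\wedge[\varphi]\chi$; (R4) $[\varphi]\mathrm{int}(\psi)\leftrightarrow(\mathrm{int}(\varphi)\to\mathrm{int}([\varphi]\psi))$; (R5) $[\varphi]K_i\psi\leftrightarrow(\mathrm{int}(\varphi)\to K_i[\varphi]\psi)$; (R6) $[\varphi][\psi]\chi\leftrightarrow[\neg[\varphi]\neg\mathrm{int}(\psi)]\chi$; (R7) $\Box\varphi\to[\chi]\varphi$ for $\chi\in\mathcal{L}_{PAL_{int}}$. Rules: modus ponens; from $\varphi$ infer $K_i\varphi$; from $\varphi$ infer $\mathrm{int}(\varphi)$; from $\varphi$ infer $[\psi]\varphi$; (DR5) from $\xi([\psi]\chi)$ for all $\psi\in\mathcal{L}_{PAL_{int}}$ infer $\xi(\Box\chi)$. Theorems: smallest set containing the axioms and closed under the rules. *)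

(* Defs.v *)
From mathcomp Require Import all_boot.
From mathcomp Require Import boolp classical_sets topology.

Set Implicit Arguments.
Unset Strict Implicit.
Unset Printing Implicit Defensive.
Local Open Scope classical_set_scope.

Section Syntax.
Variable A : Type.

Inductive form : Type :=
| Var  : nat -> form
| Neg  : form -> form
| And  : form -> form -> form
| K    : A -> form -> form
| Int  : form -> form
| Ann  : form -> form -> form
| Box  : form -> form.

Fixpoint pal (f : form) : bool :=
  match f with
  | Var _ => true
  | Neg a => pal a
  | And a b => pal a && pal b
  | K _ a => pal a
  | Int a => pal a
  | Ann a b => pal a && pal b
  | Box _ => false
  end.

Definition Imp (a b : form) : form := Neg (And a (Neg b)).
Definition Iff (a b : form) : form := And (Imp a b) (Imp b a).

(* Propositional tautologies: formulas true under every Boolean valuation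
   that treats all non-Boolean subformulas (variables, K_i, int, [.], Box)
   as atoms. *)
Fixpoint peval (v : form -> bool) (f : form) : bool :=
  match f with
  | Neg a => ~~ peval v a
  | And a b => peval v a && peval v b
  | _ => v f
  end.
Definition taut (f : form) : Prop := forall v, peval v f = true.

Inductive nform : Type :=
| NHole : nform
| NImp  : form -> nform -> nform
| NK    : A -> nform -> nform
| NInt  : nform -> nform
| NAnn  : form -> nform -> nform.

Fixpoint nfill (xi : nform) (f : form) : form :=
  match xi with
  | NHole => f
  | NImp a x => Imp a (nfill x f)
  | NK i x => K i (nfill x f)
  | NInt x => Int (nfill x f)
  | NAnn a x => Ann a (nfill x f)
  end.

Inductive thm : form -> Prop :=
| Ax_taut f : taut f -> thm f
| Ax_KK i a b : thm (Imp (K i (Imp a b)) (Imp (K i a) (K i b)))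
| Ax_KT i a : thm (Imp (K i a) a)
| Ax_K4 i a : thm (Imp (K i a) (K i (K i a)))
| Ax_K5 i a : thm (Imp (Neg (K i a)) (K i (Neg (K i a))))
| Ax_intK a b : thm (Imp (Int (Imp a b)) (Imp (Int a) (Int b)))
| Ax_intT a : thm (Imp (Int a) a)
| Ax_int4 a : thm (Imp (Int a) (Int (Int a)))
| Ax_Kint i a : thm (Imp (K i a) (Int a))
| Ax_R1 a p : thm (Iff (Ann a (Var p)) (Imp (Int a) (Var p)))
| Ax_R2 a b : thm (Iff (Ann a (Neg b)) (Imp (Int a) (Neg (Ann a b))))
| Ax_R3 a b c : thm (Iff (Ann a (And b c)) (And (Ann a b) (Ann a c)))
| Ax_R4 a b : thm (Iff (Ann a (Int b)) (Imp (Int a) (Int (Ann a b))))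
| Ax_R5 i a b : thm (Iff (Ann a (K i b)) (Imp (Int a) (K i (Ann a b))))
| Ax_R6 a b c : thm (Iff (Ann a (Ann b c)) (Ann (Neg (Ann a (Neg (Int b)))) c))
| Ax_R7 a c : pal c -> thm (Imp (Box a) (Ann c a))
| R_MP a b : thm (Imp a b) -> thm a -> thm b
| R_NecK i a : thm a -> thm (K i a)
| R_NecInt a : thm a -> thm (Int a)
| R_NecAnn a b : thm a -> thm (Ann b a)
| R_DR5 xi c : (forall b, pal b -> thm (nfill xi (Ann b c))) ->
               thm (nfill xi (Box c)).

End Syntax.

Section Semantics.
Variable A : Type.

(* A partial function theta from X to functions A -> set X, represented as
   X -> option (A -> set X); Dom theta = {x | theta x <> None}. *)
Definition pfun (X : Type) := X -> option (A -> set X).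

Definition dom (X : Type) (th : pfun X) : set X := [set x | th x <> None].

(* theta(x)(i) (empty outside the domain; only used for x in Dom theta) *)
Definition nb (X : Type) (th : pfun X) (x : X) (i : A) : set X :=
  match th x with Some f => f i | None => set0 end.

Definition restrict (X : Type) (th : pfun X) (U : set X) : pfun X :=
  fun x => if `[< U x >] then option_map (fun f i => f i `&` U) (th x)
           else None.

Definition nfs (X : topologicalType) (Phi : set (pfun X)) : Prop :=
  forall th, Phi th ->
    (forall x f, th x = Some f -> forall i,
        [/\ open (f i), f i x, f i `<=` dom th &
            forall y g, f i y -> th y = Some g -> g i = f i]) /\
    (forall U : set X, open U -> Phi (restrict th U)).

Record topo_model := TopoModel {
  carrier : topologicalType;
  Phi : set (pfun carrier);
  Phi_nfs : nfs Phi;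
  valuation : nat -> set carrier
}.

Variable M : topo_model.
Notation X := (carrier M).

(* Satisfaction for box-free formulas (used to interpret the announced
   formula psi in the clause for Box; the Box clause here is never used
   since psi ranges over L_{PAL_int}). *)
Fixpoint satP (f : form A) (th : pfun X) (x : X) : Prop :=
  match f with
  | Var p => valuation p x
  | Neg a => ~ satP a th x
  | And a b => satP a th x /\ satP b th x
  | K i a => forall y, nb th x i y -> satP a th y
  | Int a => interior [set y | dom th y /\ satP a th y] x
  | Ann a b =>
      let U := interior [set y | dom th y /\ satP a th y] in
      U x -> satP b (restrict th U) x
  | Box _ => False
  end.

Fixpoint sat (f : form A) (th : pfun X) (x : X) : Prop :=
  match f with
  | Var p => valuation p x
  | Neg a => ~ sat a th x
  | And a b => sat a th x /\ sat b th x
  | K i a => forall y, nb th x i y -> sat a th y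
  | Int a => interior [set y | dom th y /\ sat a th y] x
  | Ann a b =>
      let U := interior [set y | dom th y /\ sat a th y] in
      U x -> sat b (restrict th U) x
  | Box a =>
      forall c, pal c ->
        let U := interior [set y | dom th y /\ satP c th y] in
        U x -> sat a (restrict th U) x
  end.

End Semantics.

Definition valid (A : Type) (f : form A) : Prop :=
  forall (M : topo_model A) (th : pfun A (carrier M)) (x : carrier M),
    Phi th -> dom th x -> sat f th x.

(* Main.v *)
Require Import Defs.
From HB Require Import structures.
From mathcomp Require Import all_boot boolp classical_sets topology.
From mathcomp Require Import zify.
From Stdlib Require Import ClassicalEpsilon Classical.

Set Implicit Arguments.
Unset Strict Implicit.
Unset Printing Implicit Defensive.

Section Logic.
Variable A : finType.
Notation F := (form A).

Definition Bot : F := And (Var A 0) (Neg (Var A 0)).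
Definition Top : F := Neg Bot.

Ltac taut_solve :=
  let v := fresh "v" in move=> v; rewrite /Imp /Iff /Top /Bot /=;
  repeat match goal with
   | |- context [peval v ?x] => case: (peval v x)
   | |- context [v ?x] => case: (v x)
   end; by [].

Record theory (T : F -> Prop) : Prop := Theory {
  thT : forall f, thm f -> T f;
  mpT : forall a b, T (Imp a b) -> T a -> T b;
  dr5T : forall xi c, (forall b, pal b -> T (nfill xi (Ann b c))) -> T (nfill xi (Box c)) }.

Section Thy.
Variable T : F -> Prop.
Hypothesis hT : theory T.


Lemma tautT f : taut f -> T f. Proof. by move=> h; apply: (thT hT); constructor. Qed.

Lemma mp2T a b c : taut (Imp a (Imp b c)) -> T a -> T b -> T c.
Proof. by move=> h ha hb; apply: (mpT hT (mpT hT (tautT h) ha) hb). Qed.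
Lemma mp1T a b : taut (Imp a b) -> T a -> T b.
Proof. by move=> h ha; apply: (mpT hT (tautT h) ha). Qed.

End Thy.

Lemma thm_theory : theory (@thm A).
Proof. constructor; [by [] | exact: R_MP | exact: R_DR5]. Qed.

Definition tplus (T : F -> Prop) (d : F) : F -> Prop := fun f => T (Imp d f).
Definition tK (T : F -> Prop) (i : A) : F -> Prop := fun f => T (K i f).
Definition tI (T : F -> Prop) : F -> Prop := fun f => T (Int f).

Lemma tplus_theory T d : theory T -> theory (tplus T d).
Proof.
move=> hT; constructor.
- move=> f hf; apply: (mp1T hT _ (thT hT hf)); taut_solve.
- move=> a b h1 h2; apply: (mp2T hT _ h1 h2); taut_solve.
- move=> xi c h; exact: (@dr5T _ hT (NImp d xi) c h).
Qed.

Lemma tK_theory T i : theory T -> theory (tK T i).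
Proof.
move=> hT; constructor.
- by move=> f hf; apply: (thT hT); apply: R_NecK.
- move=> a b h1 h2; apply: (mpT hT (mpT hT (thT hT (Ax_KK i a b)) h1) h2).
- move=> xi c h; exact: (@dr5T _ hT (NK i xi) c h).
Qed.

Lemma tI_theory T : theory T -> theory (tI T).
Proof.
move=> hT; constructor.
- by move=> f hf; apply: (thT hT); apply: R_NecInt.
- move=> a b h1 h2; apply: (mpT hT (mpT hT (thT hT (Ax_intK a b)) h1) h2).
- move=> xi c h; exact: (@dr5T _ hT (NInt xi) c h).
Qed.


Record mctP (x : F -> Prop) : Prop := MctP {
  mct_th : theory x; mct_cons : ~ x Bot; mct_max : forall a, x a \/ x (Neg a) }.

Section MCT.
Variable x : F -> Prop.
Hypothesis hx : mctP x.
Let hT := mct_th hx.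

Lemma mem_thm f : thm f -> x f. Proof. exact: thT. Qed.

Lemma mem_neg a : x (Neg a) <-> ~ x a.
Proof.
split=> [hn ha|hn].
  by apply: (mct_cons hx); apply: (mp2T hT _ ha hn); taut_solve.
by case: (mct_max hx a).
Qed.

Lemma mem_and a b : x (And a b) <-> x a /\ x b.
Proof.
split=> [h|[ha hb]].
  by split; apply: (mp1T hT _ h); taut_solve.
by apply: (mp2T hT _ ha hb); taut_solve.
Qed.

Lemma mem_imp a b : x (Imp a b) <-> (x a -> x b).
Proof.
rewrite /Imp mem_neg mem_and mem_neg; split=> h.
  by move=> ha; apply: NNPP => hb; apply: h.
by move=> [ha hb]; apply: hb; apply: h.
Qed.

Lemma mem_iff a b : x (Iff a b) -> (x a <-> x b).
Proof. by rewrite /Iff mem_and !mem_imp => -[]. Qed.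

Lemma mem_mp a b : thm (Imp a b) -> x a -> x b.
Proof. by move=> h; apply/mem_imp; apply: mem_thm. Qed.

End MCT.

Fixpoint trf (f : F) : GenTree.tree nat :=
  match f with
  | Var n => GenTree.Node 0 [:: GenTree.Leaf n]
  | Neg a => GenTree.Node 1 [:: trf a]
  | And a b => GenTree.Node 2 [:: trf a; trf b]
  | K i a => GenTree.Node 3 [:: GenTree.Leaf (nat_of_ord (enum_rank i)); trf a]
  | Int a => GenTree.Node 4 [:: trf a]
  | Ann a b => GenTree.Node 5 [:: trf a; trf b]
  | Box a => GenTree.Node 6 [:: trf a]
  end.

Lemma trf_inj : injective trf.
Proof.
elim=> [n|a IH|a IHa b IHb|i a IH|a IH|a IHa b IHb|a IH]
  [m|c|c d|j c|c|c d|c] //=.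
- by move=> [->].
- by move=> [/IH ->].
- by move=> [/IHa -> /IHb ->].
- by move=> [/ord_inj/enum_rank_inj -> /IH ->].
- by move=> [/IH ->].
- by move=> [/IHa -> /IHb ->].
- by move=> [/IH ->].
Qed.

Fixpoint trn (xi : nform A) : GenTree.tree nat :=
  match xi with
  | NHole => GenTree.Node 0 [::]
  | NImp a x => GenTree.Node 1 [:: trf a; trn x]
  | NK i x => GenTree.Node 2 [:: GenTree.Leaf (nat_of_ord (enum_rank i)); trn x]
  | NInt x => GenTree.Node 3 [:: trn x]
  | NAnn a x => GenTree.Node 4 [:: trf a; trn x]
  end.

Lemma trn_inj : injective trn.
Proof.
elim=> [|a x IH|i x IH|x IH|a x IH] [|b y|j y|y|b y] //=.
- by move=> [/trf_inj -> /IH ->].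
- by move=> [/ord_inj/enum_rank_inj -> /IH ->].
- by move=> [/IH ->].
- by move=> [/trf_inj -> /IH ->].
Qed.

Definition task := (F + (nform A * F))%type.
Definition trt (t : task) : GenTree.tree nat :=
  match t with
  | inl f => GenTree.Node 0 [:: trf f]
  | inr (xi, c) => GenTree.Node 1 [:: trn xi; trf c]
  end.

Lemma trt_inj : injective trt.
Proof.
by case=> [f|[xi c]] [g|[yi d]] //= => [[/trf_inj ->]|[/trn_inj -> /trf_inj ->]].
Qed.

Definition code (t : task) : nat := pickle (trt t).
Lemma code_inj : injective code.
Proof. by move=> t1 t2 /(pcan_inj pickleK) /trt_inj. Qed.

Definition dec (n : nat) : task :=
  epsilon (inhabits (inl (Var A 0))) (fun t => code t = n).
Lemma dec_code t : dec (code t) = t.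
Proof.
apply: code_inj; rewrite /dec.
by apply: (epsilon_spec _ (fun t' => code t' = code t)); exists t.
Qed.

Section Lind.
Variable T : F -> Prop.
Hypothesis hT : theory T.
Hypothesis hc : ~ T Bot.

Definition ok (d : F) := ~ T (Neg d).

Definition pick_psi (d : F) (xi : nform A) (c : F) : F :=
  epsilon (inhabits (Var A 0)) (fun b => pal b /\
     ok (And (And d (Neg (nfill xi (Box c)))) (Neg (nfill xi (Ann b c))))).

Definition step (n : nat) (d : F) : F :=
  match dec n with
  | inl f => if pselect (ok (And d f)) then And d f else And d (Neg f)
  | inr (xi, c) => if pselect (ok (And d (Neg (nfill xi (Box c)))))
       then And (And d (Neg (nfill xi (Box c))))
                (Neg (nfill xi (Ann (pick_psi d xi c) c)))
       else d
  end.

Fixpoint delta n := match n with 0 => Top | n.+1 => step n (delta n) end.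

Lemma pick_ok d xi c : ok (And d (Neg (nfill xi (Box c)))) ->
  pal (pick_psi d xi c) /\ ok (And (And d (Neg (nfill xi (Box c))))
                                (Neg (nfill xi (Ann (pick_psi d xi c) c)))).
Proof.
move=> hok.
case: (classic (exists b, pal b /\ ok (And (And d (Neg (nfill xi (Box c))))
     (Neg (nfill xi (Ann b c)))))) => [ex|nex].
  exact: (epsilon_spec _ _ ex).
exfalso; apply: hok.
set e := And d (Neg (nfill xi (Box c))).
have H : forall b, pal b -> tplus T e (nfill xi (Ann b c)).
  move=> b pb; apply: NNPP => hn; apply: nex; exists b; split=> //.
have := dr5T (tplus_theory e hT) H; rewrite /tplus => h.
by apply: (mp1T hT _ h); taut_solve.
Qed.

Lemma delta_ok n : ok (delta n).
Proof.
elim: n => [|n IH] /=.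
  by move=> h; apply: hc; apply: (mp1T hT _ h); taut_solve.
rewrite /step; case: (dec n) => [f|[xi c]].
  case: pselect => // h1 h2; apply: IH.
  by apply: (mp2T hT _ (NNPP _ h1) h2); taut_solve.
by case: pselect => // h; have [] := pick_ok h.
Qed.

Lemma delta_mono n : T (Imp (delta n.+1) (delta n)).
Proof.
rewrite /= /step; case: (dec n) => [f|[xi c]].
  by case: pselect => ?; apply: tautT => //; taut_solve.
by case: pselect => ?; apply: tautT => //; taut_solve.
Qed.

Lemma delta_up n f : T (Imp (delta n) f) -> forall m, n <= m -> T (Imp (delta m) f).
Proof.
move=> h m /subnK <-; elim: (m - n) => [|k IH] //=.
apply: (mp2T hT _ (delta_mono (k + n)) IH); taut_solve.
Qed.

Definition Y : F -> Prop := fun f => exists n, T (Imp (delta n) f).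

Lemma Y_cons : ~ Y Bot.
Proof.
move=> [n h]; move: (@delta_ok n); rewrite /ok; apply.
by apply: (mp1T hT _ h); taut_solve.
Qed.

Lemma Y_sub f : T f -> Y f.
Proof. by move=> h; exists 0; apply: (mp1T hT _ h); taut_solve. Qed.

Lemma delta_S n : delta n.+1 = step n (delta n). Proof. by []. Qed.

Lemma Y_max a : Y a \/ Y (Neg a).
Proof.
have [k Hk] : exists k, dec k = inl a by exists (code (inl a)); exact: dec_code.
have E := delta_S k.
move: E; rewrite /step Hk; case: pselect => ? E.
  by left; exists k.+1; rewrite E; apply: tautT => //; taut_solve.
by right; exists k.+1; rewrite E; apply: tautT => //; taut_solve.
Qed.

Lemma Y_two n1 n2 a b : T (Imp (delta n1) a) -> T (Imp (delta n2) b) ->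
  exists m, T (Imp (delta m) a) /\ T (Imp (delta m) b).
Proof.
move=> h1 h2; exists (maxn n1 n2); split.
  by apply: (delta_up h1); apply: leq_maxl.
by apply: (delta_up h2); apply: leq_maxr.
Qed.

Lemma Y_theory : theory Y.
Proof.
constructor.
- by move=> f hf; apply: Y_sub; apply: thT.
- move=> a b [n1 h1] [n2 h2]; have [m [g1 g2]] := Y_two h1 h2.
  by exists m; apply: (mp2T hT _ g1 g2); taut_solve.
- move=> xi c H; apply: NNPP => hn.
  have [k Hk] : exists k, dec k = inr (xi, c) by exists (code (inr (xi, c))); exact: dec_code.
  have E := delta_S k.
  move: E; rewrite /step Hk; case: pselect => hok E; last first.
    apply: hn; exists k.
    by apply: (mp1T hT _ (NNPP _ hok)); taut_solve.
  have [pp _] := pick_ok hok.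
  have [n h] := H _ pp.
  have h2 : T (Imp (delta k.+1)
         (Neg (nfill xi (Ann (pick_psi (delta k) xi c) c)))).
    by rewrite E; apply: tautT => //; taut_solve.
  have [m [g1 g2]] := Y_two h h2.
  by move: (@delta_ok m); rewrite /ok; apply; apply: (mp2T hT _ g1 g2); taut_solve.
Qed.

Lemma Y_mct : mctP Y.
Proof. by constructor; [exact: Y_theory | exact: Y_cons | exact: Y_max]. Qed.

End Lind.

Lemma lindenbaum T e : theory T -> ~ T (Neg e) ->
  exists x, [/\ mctP x, forall f, T f -> x f & x e].
Proof.
move=> hT he.
have hc : ~ tplus T e Bot.
  by move=> h; apply: he; apply: (mp1T hT _ h); taut_solve.
have hT' := tplus_theory e hT.
exists (Y (tplus T e)); split.
- exact: Y_mct.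
- move=> f hf; apply: (Y_sub hT'); rewrite /tplus.
  by apply: (mp1T hT _ hf); taut_solve.
- by apply: (Y_sub hT'); rewrite /tplus; apply: (tautT hT); taut_solve.
Qed.

End Logic.

Ltac taut_solve :=
  let v := fresh "v" in move=> v; rewrite /Imp /Iff /Top /Bot /=;
  repeat match goal with
   | |- context [peval v ?x] => case: (peval v x)
   | |- context [v ?x] => case: (v x)
   end; by [].

Section Restr.
Variable A : Type.
Variable X : Type.
Local Open Scope classical_set_scope.
Implicit Types (th : pfun A X) (x : X).

Lemma restrictK th U V : restrict (restrict th U) V = restrict th (U `&` V).
Proof.
apply: funext => x; rewrite /restrict.
case: (asboolP (V x)) => hV; case: (asboolP (U x)) => hU;
  case: (asboolP ((U `&` V) x)) => hUV //=.
- by case: (th x) => //= f; congr Some; apply: funext => i; rewrite setIA.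
- by exfalso; apply: hUV.
- by case: hUV.
- by case: hUV.
- by case: hUV.
Qed.

Lemma dom_restrict th U x : dom (restrict th U) x <-> U x /\ dom th x.
Proof.
rewrite /dom /restrict /=; case: (asboolP (U x)) => hU.
  by case: (th x) => //=; split=> // -[].
by split=> // -[].
Qed.

Lemma nb_restrict th U x i : U x -> nb (restrict th U) x i = nb th x i `&` U.
Proof.
move=> hU; rewrite /nb /restrict; case: (asboolP (U x)) => // _.
by case: (th x) => //=; rewrite set0I.
Qed.

End Restr.

Section Sem.
Variable A : Type.
Variable M : topo_model A.
Notation X := (carrier M).
Local Open Scope classical_set_scope.
Implicit Types (th : pfun A X) (x : X).

Lemma sat_imp a b th x : sat (Imp a b) th x <-> (sat a th x -> sat b th x).
Proof.
rewrite /Imp /=; split=> h.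
  by move=> ha; apply: NNPP => hb; apply: h.
by move=> [ha hb]; apply: hb; apply: h.
Qed.

Lemma sat_pal c : pal c -> forall th x, satP c th x <-> sat c th x.
Proof.
elim: c => [p|a IH|a IHa b IHb|i a IH|a IH|a IHa b IHb|a IH] //=.
- by move=> pa th x; rewrite IH.
- move=> /andP[pa pb] th x; rewrite IHa // IHb //.
- move=> pa th x; split=> h y hy; [apply/IH|apply/IH] => //; exact: h.
- move=> pa th x.
  have -> : [set y | dom th y /\ satP a th y] = [set y | dom th y /\ sat a th y] => //.
  by apply: funext => y; apply: propext; split=> -[d h]; split=> //; apply/(IH pa).
- move=> /andP[pa pb] th x.
  have -> : [set y | dom th y /\ satP a th y] = [set y | dom th y /\ sat a th y].
    by apply: funext => y; apply: propext; split=> -[d h]; split=> //; apply/(IHa pa).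
  by split=> h hU; apply/(IHb pb); apply: h.
Qed.

Section Red.
Variables (a : form A) (th : pfun A X).
Let U := interior [set y | dom th y /\ sat a th y].

Lemma U_open : open U. Proof. exact: open_interior. Qed.
Lemma U_dom y : U y -> dom th y.
Proof. by move=> /interior_subset []. Qed.

Lemma red1 p x : sat (Ann a (Var A p)) th x <-> sat (Imp (Int a) (Var A p)) th x.
Proof. by rewrite sat_imp. Qed.

Lemma red2 b x : sat (Ann a (Neg b)) th x <-> sat (Imp (Int a) (Neg (Ann a b))) th x.
Proof. rewrite sat_imp /=; tauto. Qed.

Lemma red3 b c x : sat (Ann a (And b c)) th x <-> sat (And (Ann a b) (Ann a c)) th x.
Proof. rewrite /=; tauto. Qed.

Lemma red4 b x : sat (Ann a (Int b)) th x <-> sat (Imp (Int a) (Int (Ann a b))) th x.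
Proof.
rewrite sat_imp /= -/U.
have -> : [set y | dom (restrict th U) y /\ sat b (restrict th U) y] =
   U `&` [set y | dom th y /\ (U y -> sat b (restrict th U) y)].
  apply: funext => y; apply: propext; split=> /=.
    by move=> [/dom_restrict [hU hd] hb]; split=> //; split.
  by move=> [hU [hd hb]]; split; [apply/dom_restrict|apply: hb].
rewrite interiorI (proj1 (interior_id _) U_open).
split=> h hU; first by have [] := h hU.
by split=> //; apply: h.
Qed.

Lemma red5 i b x : sat (Ann a (K i b)) th x <-> sat (Imp (Int a) (K i (Ann a b))) th x.
Proof.
rewrite sat_imp /= -/U; split=> h hU y.
  by move=> hy hUy; apply: h => //; rewrite nb_restrict.
by rewrite nb_restrict // => -[hy hUy]; apply: h.
Qed.

Lemma red6 b c x : sat (Ann a (Ann b c)) th x <-> sat (Ann (Neg (Ann a (Neg (Int b)))) c) th x.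
Proof.
rewrite /= -/U.
set V := interior [set y | dom (restrict th U) y /\ sat b (restrict th U) y].
have VU : forall y, V y -> U y.
  by move=> y /interior_subset [/dom_restrict []].
have -> : [set y | dom th y /\ ~ (U y -> ~ V y)] = V.
  apply: funext => y; apply: propext; split=> /=.
    by move=> [_ h]; apply: NNPP => hv; apply: h.
  move=> hv; split; first by apply: U_dom; apply: VU.
  by move=> h; apply: h => //; apply: VU.
rewrite (proj1 (interior_id _) (@open_interior _ _)) restrictK.
have -> : U `&` V = V.
  by apply: funext => y; apply: propext; split=> [[]//|hv]; split=> //; apply: VU.
by split=> h hv => [|hU]; [apply: h => //; apply: VU | apply: h].
Qed.

End Red.

Lemma red7 c th x : sat (Box c) th x <-> forall b, pal b -> sat (Ann b c) th x.
Proof.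
rewrite /=; split=> h b pb.
  have E : [set y | dom th y /\ satP b th y] = [set y | dom th y /\ sat b th y].
    by apply: funext => y; apply: propext; split=> -[d hb]; split=> //; apply/(sat_pal pb).
  by have := h b pb; rewrite /= E.
have E : [set y | dom th y /\ satP b th y] = [set y | dom th y /\ sat b th y].
  by apply: funext => y; apply: propext; split=> -[d hb]; split=> //; apply/(sat_pal pb).
by rewrite /= E; apply: h.
Qed.

Lemma red8 a c th x : sat (Ann a (Box c)) th x <-> forall b, pal b -> sat (Ann a (Ann b c)) th x.
Proof.
rewrite [sat (Ann a (Box c)) _ _]/=; split=> h.
  by move=> b pb /= hU; have := h hU; move/red7; apply.
by move=> hU; apply/red7 => b pb; exact: h b pb hU.
Qed.

End Sem.


Record mct (A : finType) := MCT { mset :> form A -> Prop; mctp : mctP mset }.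
HB.instance Definition _ (A : finType) := gen_eqMixin (mct A).
HB.instance Definition _ (A : finType) := gen_choiceMixin (mct A).

Section Canon.
Variable A : finType.
Local Open Scope classical_set_scope.
Implicit Types x y z : mct A.

Definition le x y := forall b, x (Int b) -> y b.
Definition upset (O : set (mct A)) := forall x y, O x -> le x y -> O y.

Lemma upT : upset setT. Proof. by []. Qed.
Lemma upI : setI_closed upset.
Proof. by move=> B C hB hC x y [bx cx] l; split; [apply: hB bx l|apply: hC cx l]. Qed.
Lemma up_bigU (I : Type) (f : I -> set (mct A)) : (forall i, upset (f i)) ->
  upset (\bigcup_i f i).
Proof. by move=> h x y [i _ fx] l; exists i => //; apply: h fx l. Qed.

HB.instance Definition _ := isOpenTopological.Build (mct A) upT upI up_bigU.

Lemma interiorE (S : set (mct A)) x : interior S x <-> exists B, [/\ upset B, B x & B `<=` S].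
Proof. by []. Qed.

Lemma open_up (B : set (mct A)) : upset B -> open B.
Proof.
move=> hB; rewrite openE.
have h : B `<=` interior B by move=> x Bx; apply/interiorE; exists B; split.
exact: h.
Qed.

Definition eqK (i : A) x y := forall b, x (K i b) <-> y (K i b).

Lemma ueqK i x : upset [set y | eqK i x y].
Proof.
move=> z y /= e l b; rewrite e; split=> h.
  apply: l; apply: (mem_mp (mctp z) (Ax_Kint i _)).
  exact: (mem_mp (mctp z) (Ax_K4 i b)).
apply: NNPP => hn; have /(mem_neg (mctp z)) := hn.
move/(mem_mp (mctp z) (Ax_K5 i b))/(mem_mp (mctp z) (Ax_Kint i _))/l.
by move/(mem_neg (mctp y)).
Qed.

Lemma canK i a x : (forall y, eqK i x y -> y a) <-> x (K i a).
Proof.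
split=> [h|hK y e]; last first.
  by apply: (mem_mp (mctp y) (Ax_KT i a)); apply/(e a).
apply: NNPP => hn.
have hT := tK_theory i (mct_th (mctp x)).
have hc : ~ tK x i (Neg (Neg a)).
  move=> h1; apply: hn; rewrite /tK in h1.
  have h2 : x (K i (Imp (Neg (Neg a)) a)).
    by apply: (mem_thm (mctp x)); apply: R_NecK; apply: Ax_taut; taut_solve.
  have := mem_mp (mctp x) (Ax_KK i (Neg (Neg a)) a) h2.
  by move/(mem_imp (mctp x))/(_ h1).
have [z [pz sub za]] := lindenbaum hT hc.
pose y := MCT pz.
have e : eqK i x y.
  move=> b; split=> hb.
    by apply: sub; rewrite /tK; apply: (mem_mp (mctp x) (Ax_K4 i b)).
  apply: NNPP => hn'; have /(mem_neg (mctp x)) := hn'.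
  move/(mem_mp (mctp x) (Ax_K5 i b)) => h5.
  have : z (Neg (K i b)) by apply: sub.
  by move/(mem_neg pz).
have := h y e; rewrite /= => ya.
by move: za => /(mem_neg pz).
Qed.

Lemma canI a x : interior [set y : mct A | y a] x <-> x (Int a).
Proof.
rewrite interiorE; split=> [[B [uB Bx BS]]|hi]; last first.
  exists [set y : mct A | y (Int a)]; split => //.
  - move=> x' y /= h l; apply: l.
    exact: (mem_mp (mctp x') (Ax_int4 a)).
  - by move=> y /= h; apply: (mem_mp (mctp y) (Ax_intT a)).
apply: NNPP => hn.
have hT := tI_theory (mct_th (mctp x)).
have hc : ~ tI x (Neg (Neg a)).
  move=> h1; apply: hn; rewrite /tI in h1.
  have h2 : x (Int (Imp (Neg (Neg a)) a)).
    by apply: (mem_thm (mctp x)); apply: R_NecInt; apply: Ax_taut; taut_solve.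
  have := mem_mp (mctp x) (Ax_intK (Neg (Neg a)) a) h2.
  by move/(mem_imp (mctp x))/(_ h1).
have [z [pz sub za]] := lindenbaum hT hc.
pose y := MCT pz.
have l : le x y by move=> b hb; apply: sub.
have := BS y (uB x y Bx l); rewrite /= => ya.
by move: za => /(mem_neg pz).
Qed.

Definition th0 : pfun A (mct A) := fun x => Some (fun i => [set y | eqK i x y]).
Definition Phi0 : set (pfun A (mct A)) :=
  fun th => exists U : set (mct A), open U /\ th = restrict th0 U.

Lemma eqK_trans i x y z : eqK i x y -> eqK i y z -> eqK i x z.
Proof. by move=> e1 e2 b; rewrite e1 e2. Qed.
Lemma eqK_sym i x y : eqK i x y -> eqK i y x.
Proof. by move=> e b; rewrite e. Qed.

Lemma Phi0_nfs : nfs Phi0.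
Proof.
move=> th [U [oU ->]]; split; last first.
  move=> V oV; exists (U `&` V); split; first exact: openI.
  by rewrite restrictK.
move=> x f; rewrite /restrict; case: (asboolP (U x)) => // hU [<-] i.
split.
- by apply: openI => //; apply: open_up; apply: ueqK.
- by split=> //.
- move=> y [_ hy]; apply/dom_restrict; split=> //.
- move=> y g [e hy]; case: (asboolP (U y)) => // _ [<-].
  congr (_ `&` _); apply: funext => z; apply: propext; split=> /=.
    by move=> e2; apply: eqK_trans e e2.
  by move=> e2; apply: eqK_trans (eqK_sym e) e2.
Qed.

Lemma Phi0_th0 : Phi0 th0.
Proof.
exists setT; split; first exact: openT.
apply: funext => x; rewrite /restrict asboolT //=.
by congr Some; apply: funext => i; rewrite setIT.
Qed.

Definition M0 := @TopoModel A (mct A) Phi0 Phi0_nfs (fun p (x : mct A) => x (Var A p)).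

Fixpoint dm (f : form A) : nat :=
  match f with
  | Var _ => 0 | Neg a => dm a | And a b => maxn (dm a) (dm b) | K _ a => dm a
  | Int a => dm a | Ann a b => dm a + dm b | Box a => (dm a).+1
  end.
Fixpoint cm (f : form A) : nat :=
  match f with
  | Var _ => 1 | Neg a => (cm a).+1 | And a b => (maxn (cm a) (cm b)).+1
  | K _ a => (cm a).+1 | Int a => (cm a).+1 | Ann a b => (4 + cm a) * cm b
  | Box a => (cm a).+1
  end.

Lemma dm_pal c : pal c -> dm c = 0.
Proof.
elim: c => //= [a IHa b IHb|a IHa b IHb] /andP[pa pb]; rewrite IHa // IHb //.
Qed.

Lemma cm_pos f : 0 < cm f.
Proof. elim: f => //= a IHa b IHb; rewrite muln_gt0 IHb andbT //. Qed.

Definition lexlt g f := dm g < dm f \/ (dm g = dm f /\ cm g < cm f).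

Lemma lex_sub g f : dm g <= dm f -> cm g < cm f -> lexlt g f.
Proof.
rewrite leq_eqVlt => /orP[/eqP e|l] c; [by right|by left].
Qed.

Lemma lex_ind (P : form A -> Prop) :
  (forall f, (forall g, lexlt g f -> P g) -> P f) -> forall f, P f.
Proof.
move=> H.
have Q : forall n f, dm f < n -> P f.
  elim=> [|n IHn] f //.
  have R : forall m f, dm f <= n -> cm f < m -> P f.
    elim=> [|m IHm] g //= hd hc; apply: H => h [hl|[he hl]].
      by apply: IHn; lia.
    by apply: IHm; lia.
  by move=> hf; apply: (R (cm f).+1).
by move=> f; apply: (Q (dm f).+1).
Qed.

Lemma ax_iff (x : mct A) P Q : thm (Iff P Q) -> (x P <-> x Q).
Proof. by move=> h; apply: (mem_iff (mctp x)); apply: (mem_thm (mctp x)). Qed.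

Notation "x |= f" := (@sat A M0 f th0 x) (at level 70).

Lemma truth : forall f (x : mct A), x |= f <-> x f.
Proof.
apply: lex_ind => f IH x.
case: f IH => [p|a|a b|i a|a|a b|c] IH.
- by [].
- rewrite /= (IH a); last by right; split=> //=.
  by rewrite (mem_neg (mctp x)).
- rewrite /= (IH a); last by apply: lex_sub => /=; lia.
  rewrite (IH b); last by apply: lex_sub => /=; lia.
  by rewrite (mem_and (mctp x)).
- rewrite -canK /=; split=> h y hy; [apply/IH|apply/IH] => //; try exact: h;
    by right; split.
- rewrite -canI /=.
  have -> : [set y | dom th0 y /\ y |= a] = [set y : mct A | y a] => //.
  apply: funext => y; apply: propext; split=> /= [[_ /IH]|hy]; first by apply; right.
  by split; [|apply/IH => //; right].
- have ca := cm_pos a.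
  case: b IH => [p|b|b c|i b|b|b c|c] IH.
  + rewrite red1 (IH _ _ x); last by apply: lex_sub => /=; nia.
    by apply: iff_sym; apply: ax_iff; exact: Ax_R1.
  + have cb := cm_pos b.
    rewrite red2 (IH _ _ x); last by apply: lex_sub => /=; nia.
    by apply: iff_sym; apply: ax_iff; exact: Ax_R2.
  + have cb := cm_pos b; have cc := cm_pos c.
    rewrite red3 (IH _ _ x); last by apply: lex_sub => /=; nia.
    by apply: iff_sym; apply: ax_iff; exact: Ax_R3.
  + have cb := cm_pos b.
    rewrite red5 (IH _ _ x); last by apply: lex_sub => /=; nia.
    by apply: iff_sym; apply: ax_iff; exact: Ax_R5.
  + have cb := cm_pos b.
    rewrite red4 (IH _ _ x); last by apply: lex_sub => /=; nia.
    by apply: iff_sym; apply: ax_iff; exact: Ax_R4.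
  + have cb := cm_pos b; have cc := cm_pos c.
    rewrite red6 (IH _ _ x); last by apply: lex_sub => /=; nia.
    by apply: iff_sym; apply: ax_iff; exact: Ax_R6.
  + rewrite red8; split=> [h|h b pb].
      apply: (dr5T (mct_th (mctp x)) (xi := NAnn a (NHole A))) => b pb /=.
      by apply/IH; [left; rewrite /= (dm_pal pb); lia | exact: h].
    have hx := mctp x.
    have lt : lexlt (Ann a (Ann b c)) (Ann a (Box c)).
      by left; rewrite /= (dm_pal pb); lia.
    have lt2 : lexlt (Int a) (Ann a (Box c)) by left => /=; lia.
    case: (mct_max hx (Int a)) => hi; last first.
      move=> /= hU; exfalso; move/(mem_neg hx): hi; apply.
      exact/(IH _ lt2 x).
    apply/(IH _ lt x).
    have h1 : x (Ann a (Imp (Box c) (Ann b c))).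
      by apply: (mem_thm hx); apply: R_NecAnn; exact: Ax_R7.
    move: h1; rewrite /Imp (ax_iff _ (Ax_R2 _ _)) (mem_imp hx) => /(_ hi).
    rewrite (mem_neg hx) (ax_iff _ (Ax_R3 _ _ _)) (mem_and hx) => h2.
    have h3 : ~ x (Ann a (Neg (Ann b c))) by move=> h3; apply: h2.
    move: h3; rewrite (ax_iff _ (Ax_R2 _ _)) (mem_imp hx) => h3.
    apply: NNPP => h4; apply: h3 => _; exact/(mem_neg hx).
- rewrite red7; split=> [h|h b pb].
    apply: (dr5T (mct_th (mctp x)) (xi := NHole A)) => b pb /=.
    by apply/IH; [left; rewrite /= dm_pal //|exact: h].
  apply/IH; first by left; rewrite /= dm_pal.
  exact: (mem_mp (mctp x) (Ax_R7 c pb)).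
Qed.

End Canon.

Theorem mainTheorem3 (A : finType) (hA : 0 < #|A|) (f : form A) :
  valid f -> thm f.
Proof.
move=> hv; apply: NNPP => hn.
have hT := @thm_theory A.
have hc : ~ thm (Neg (Neg f)).
  move=> h; apply: hn; apply: (R_MP _ h); apply: Ax_taut; taut_solve.
have [z [pz _ zf]] := lindenbaum hT hc.
pose x := MCT pz.
have hs := hv (@M0 A) (@th0 A) x (@Phi0_th0 A) (fun e : Some _ = None => ltac:(discriminate)).
have hf : z f by apply: (proj1 (truth f x)); exact: hs.
by move/(mem_neg pz): zf.
Qed.
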